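(* Let $k\ge1$, $\varepsilon>0$, and let $p,q\in\Delta([k]\times[k])$ have marginals $p_1,p_2$ and $q_1,q_2$ respectively. Then $$\|\mathcal T(p)-\mathcal T(q)\|_2^2=\frac{\alpha_H^4}{K^2}\|p-q\|_2^2+\frac{\alpha_H^2}{K^2}\big(\|p_1-q_1\|_2^2+\|p_2-q_2\|_2^2\big).$$ In particular, if $d_{TV}(p,q)>\gamma$ then $\|\mathcal T(p)-\mathcal T(q)\|_2>\frac{2\alpha_H^2\gamma}{Kk}$.
   Context: $d_{TV}(p,q)=\frac12\|p-q\|_1$. Hadamard Response (HR): let $K=2^{\lceil\log_2(k+1)\rceil}$ and let $H_K\in\{-1,1\}^{K\times K}$ be the Sylvester Hadamard matrix ($H_1=[1]$, $H_{2m}=\begin{bmatrix}H_m&H_m\\H_m&-H_m\end{bmatrix}$). Fix an injection $\phi:[k]\to\{2,\dots,K\}$ and set $C_x=\{z\in[K]:(H_K)_{\phi(x),z}=1\}$. On input $x\in[k]$, HR outputs $z\in[K]$ with probability $W(z\mid x)=\frac{2}{K}\cdot\frac{e^\varepsilon}{e^\varepsilon+1}$ if $z\in C_x$ and $\frac{2}{K}\cdot\frac{1}{e^\varepsilon+1}$ otherwise. $\alpha_H=(e^\varepsilon-1)/(e^\varepsilon+1)$. For $p\in\Delta([k]\times[k])$, $\mathcal T(p)\in\Delta([K]\times[K])$ is the distribution of $(Z_1,Z_2)$ where $(X_1,X_2)\sim p$ and $Z_1,Z_2$ are obtained by applying HR independently to $X_1$ and to $X_2$, i.e. $\mathcal T(p)(z_1,z_2)=\sum_{x_1,x_2}W(z_1\mid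 x_1)W(z_2\mid x_2)p(x_1,x_2)$. *)

(* Defs.v *)
(* real numbers with exp. All indices are 0-based:
   [k] = {0,...,k-1}, [K] = {0,...,K-1}; the paper's row 1 of H_K
   (the all-ones row) is our row 0, so phi maps into {1,...,K-1}. *)
From Stdlib Require Import Reals Arith List.
Open Scope R_scope.

Definition fsum (n : nat) (f : nat -> R) : R :=
  fold_right Rplus 0 (map f (seq 0 n)).

(* Sylvester Hadamard matrix H_{2^m}, entries indexed from 0:
   H_1 = [1], H_{2m} = [[H_m, H_m],[H_m, -H_m]]. *)
Fixpoint hadamard (m : nat) (i j : nat) : R :=
  match m with
  | O => 1
  | S m' =>
      let h := (2 ^ m')%nat in
      if (i <? h)%nat then
        (if (j <? h)%nat then hadamard m' i j else hadamard m' i (j - h))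
      else
        (if (j <? h)%nat then hadamard m' (i - h) j
         else - hadamard m' (i - h) (j - h))
  end.

Definition logK (k : nat) : nat := Nat.log2_up (k + 1).
Definition Kof (k : nat) : nat := (2 ^ logK k)%nat.

(* phi is an injection [k] -> {2,...,K} (1-based), i.e. {1,...,K-1} (0-based) *)
Definition valid_phi (k : nat) (phi : nat -> nat) : Prop :=
  (forall x, (x < k)%nat -> (1 <= phi x < Kof k)%nat) /\
  (forall x y, (x < k)%nat -> (y < k)%nat -> phi x = phi y -> x = y).

Definition HR_W (k : nat) (eps : R) (phi : nat -> nat) (z x : nat) : R :=
  if Req_EM_T (hadamard (logK k) (phi x) z) 1
  then (2 / INR (Kof k)) * (exp eps / (exp eps + 1))
  else (2 / INR (Kof k)) * (1 / (exp eps + 1)).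

Definition alphaH (eps : R) : R := (exp eps - 1) / (exp eps + 1).

Definition is_dist2 (k : nat) (p : nat -> nat -> R) : Prop :=
  (forall x1 x2, (x1 < k)%nat -> (x2 < k)%nat -> 0 <= p x1 x2) /\
  fsum k (fun x1 => fsum k (fun x2 => p x1 x2)) = 1.

Definition HR_T (k : nat) (eps : R) (phi : nat -> nat) (p : nat -> nat -> R)
    (z1 z2 : nat) : R :=
  fsum k (fun x1 => fsum k (fun x2 =>
    HR_W k eps phi z1 x1 * HR_W k eps phi z2 x2 * p x1 x2)).

Definition marg1 (k : nat) (p : nat -> nat -> R) (x : nat) : R :=
  fsum k (fun x2 => p x x2).
Definition marg2 (k : nat) (p : nat -> nat -> R) (x : nat) : R :=
  fsum k (fun x1 => p x1 x).

Definition l2sq1 (n : nat) (f g : nat -> R) : R :=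
  fsum n (fun i => (f i - g i) ^ 2).
Definition l2sq2 (n : nat) (f g : nat -> nat -> R) : R :=
  fsum n (fun i => fsum n (fun j => (f i j - g i j) ^ 2)).

Definition dTV2 (k : nat) (p q : nat -> nat -> R) : R :=
  / 2 * fsum k (fun i => fsum k (fun j => Rabs (p i j - q i j))).

(* Main.v *)
Require Import Defs.
From Stdlib Require Import Reals Arith List Lia Lra.
Open Scope R_scope.

Lemma fold_init l a : fold_right Rplus a l = fold_right Rplus 0 l + a.
Proof. induction l; simpl; [ring| rewrite IHl; ring]. Qed.

Lemma fsum_0 f : fsum 0 f = 0.
Proof. reflexivity. Qed.

Lemma fsum_S n f : fsum (S n) f = fsum n f + f n.
Proof.
  unfold fsum. rewrite seq_S, map_app, fold_right_app. simpl.
  rewrite fold_init. ring.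
Qed.

Lemma fsum_ext n f g : (forall i, (i < n)%nat -> f i = g i) -> fsum n f = fsum n g.
Proof.
  induction n; intros H; [reflexivity|].
  rewrite !fsum_S, IHn by (intros; apply H; lia). rewrite H by lia. reflexivity.
Qed.

Lemma fsum_plus n f g : fsum n (fun i => f i + g i) = fsum n f + fsum n g.
Proof. induction n; [unfold fsum; simpl; ring|]. rewrite !fsum_S, IHn. ring. Qed.

Lemma fsum_scal n c f : fsum n (fun i => c * f i) = c * fsum n f.
Proof. induction n; [unfold fsum; simpl; ring|]. rewrite !fsum_S, IHn. ring. Qed.

Lemma fsum_scalr n c f : fsum n (fun i => f i * c) = fsum n f * c.
Proof. induction n; [unfold fsum; simpl; ring|]. rewrite !fsum_S, IHn. ring. Qed.

Lemma fsum_const n c : fsum n (fun _ => c) = INR n * c.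
Proof. induction n; [unfold fsum; simpl; ring|]. rewrite !fsum_S, IHn, S_INR. ring. Qed.

Lemma fsum_zero n : fsum n (fun _ => 0) = 0.
Proof. rewrite fsum_const. ring. Qed.

Lemma fsum_minus n f g : fsum n (fun i => f i - g i) = fsum n f - fsum n g.
Proof. induction n; [unfold fsum; simpl; ring|]. rewrite !fsum_S, IHn. ring. Qed.

Lemma fsum_swap n m F :
  fsum n (fun i => fsum m (fun j => F i j)) = fsum m (fun j => fsum n (fun i => F i j)).
Proof.
  induction n.
  - rewrite fsum_0. symmetry. apply fsum_zero.
  - rewrite fsum_S, IHn. rewrite <- fsum_plus. apply fsum_ext. intros. rewrite fsum_S. ring.
Qed.

Lemma fsum_split a b f : fsum (a + b) f = fsum a f + fsum b (fun i => f (a + i)%nat).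
Proof.
  induction b.
  - rewrite Nat.add_0_r, fsum_0. ring.
  - rewrite Nat.add_succ_r, !fsum_S, IHb. ring.
Qed.

Lemma fsum_prod n m f g :
  fsum n f * fsum m g = fsum n (fun i => fsum m (fun j => f i * g j)).
Proof.
  rewrite <- fsum_scalr. apply fsum_ext. intros. rewrite fsum_scal. reflexivity.
Qed.

Lemma fsum_le n f g : (forall i, (i < n)%nat -> f i <= g i) -> fsum n f <= fsum n g.
Proof.
  induction n; intros H; [unfold fsum; simpl; lra|].
  rewrite !fsum_S. apply Rplus_le_compat; [apply IHn; intros; apply H; lia| apply H; lia].
Qed.

Lemma fsum_nonneg n f : (forall i, (i < n)%nat -> 0 <= f i) -> 0 <= fsum n f.
Proof. intros H. rewrite <- (fsum_zero n). apply fsum_le. auto. Qed.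

Lemma fsum_delta n x g : (x < n)%nat ->
  fsum n (fun y => if Nat.eqb x y then g y else 0) = g x.
Proof.
  induction n; intros H; [lia|].
  rewrite fsum_S. destruct (Nat.eq_dec x n).
  - subst. rewrite Nat.eqb_refl.
    rewrite (fsum_ext _ _ (fun _ => 0)). rewrite fsum_zero. ring.
    intros. destruct (Nat.eqb_spec n i); [lia|reflexivity].
  - rewrite IHn by lia. destruct (Nat.eqb_spec x n); [lia|]. ring.
Qed.

Lemma fsum_cs n f : (fsum n f) ^ 2 <= INR n * fsum n (fun i => f i ^ 2).
Proof.
  induction n.
  - unfold fsum; simpl. lra.
  - rewrite !fsum_S, S_INR.
    set (x := f n). set (S := fsum n f). set (Q := fsum n (fun i => f i ^ 2)).
    assert (Hd : 0 <= Q - 2 * x * S + INR n * x ^ 2).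
    { assert (E : fsum n (fun i => (f i - x) ^ 2) = Q - 2 * x * S + INR n * x ^ 2).
      { unfold Q, S. rewrite <- fsum_scal, <- fsum_minus, <- fsum_const, <- fsum_plus.
        apply fsum_ext. intros. ring. }
      rewrite <- E. apply fsum_nonneg. intros. apply pow2_ge_0. }
    fold x S Q in IHn.
    assert (E2 : (INR n + 1) * (Q + x ^ 2) - (S + x) ^ 2 = (INR n * Q - S ^ 2) + (Q - 2 * x * S + INR n * x ^ 2)) by ring.
    lra.
Qed.

Lemma had_S m i j : hadamard (S m) i j =
  (if (i <? 2 ^ m)%nat then
        (if (j <? 2 ^ m)%nat then hadamard m i j else hadamard m i (j - 2 ^ m))
      else
        (if (j <? 2 ^ m)%nat then hadamard m (i - 2 ^ m) j
         else - hadamard m (i - 2 ^ m) (j - 2 ^ m))).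
Proof. reflexivity. Qed.

Lemma pow2_pos m : (0 < 2 ^ m)%nat.
Proof. apply Nat.neq_0_lt_0. apply Nat.pow_nonzero. lia. Qed.

Lemma had_pm m i j : hadamard m i j = 1 \/ hadamard m i j = -1.
Proof.
  revert i j; induction m; intros i j; [left; reflexivity|].
  rewrite had_S.
  destruct (i <? 2 ^ m)%nat, (j <? 2 ^ m)%nat; auto.
  destruct (IHm (i - 2 ^ m)%nat (j - 2 ^ m)%nat) as [E|E]; rewrite E; [right|left]; ring.
Qed.

Lemma had_row0 m j : hadamard m 0 j = 1.
Proof.
  revert j; induction m; intros j; [reflexivity|].
  rewrite had_S. pose proof (pow2_pos m).
  destruct (Nat.ltb_spec 0 (2 ^ m)); [|lia].
  destruct (j <? 2 ^ m)%nat; apply IHm.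
Qed.

Lemma had_orth m i j : (i < 2 ^ m)%nat -> (j < 2 ^ m)%nat ->
  fsum (2 ^ m) (fun z => hadamard m i z * hadamard m j z) =
  if Nat.eqb i j then INR (2 ^ m) else 0.
Proof.
  revert i j; induction m; intros i j Hi Hj.
  - simpl in Hi, Hj. assert (i = 0)%nat by lia. assert (j = 0)%nat by lia. subst.
    simpl. unfold fsum. simpl. ring.
  - assert (Hs : (2 ^ S m = 2 ^ m + 2 ^ m)%nat) by (simpl; lia).
    rewrite Hs in *. rewrite fsum_split. set (h := (2 ^ m)%nat) in *.
    assert (E1 : forall F, fsum h (fun z => F (hadamard (S m) i z) (hadamard (S m) j z)) =
       fsum h (fun z => F (if (i <? h)%nat then hadamard m i z else hadamard m (i - h) z)
                          (if (j <? h)%nat then hadamard m j z else hadamard m (j - h) z))).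
    { intros F. apply fsum_ext. intros z Hz. rewrite !had_S. fold h.
      destruct (Nat.ltb_spec z h); [|lia].
      destruct (i <? h)%nat, (j <? h)%nat; reflexivity. }
    assert (E2 : forall F, fsum h (fun z => F (hadamard (S m) i (h + z)) (hadamard (S m) j (h + z))) =
       fsum h (fun z => F (if (i <? h)%nat then hadamard m i z else - hadamard m (i - h) z)
                          (if (j <? h)%nat then hadamard m j z else - hadamard m (j - h) z))).
    { intros F. apply fsum_ext. intros z Hz. rewrite !had_S. fold h.
      destruct (Nat.ltb_spec (h + z) h); [lia|].
      replace (h + z - h)%nat with z by lia.
      destruct (i <? h)%nat, (j <? h)%nat; reflexivity. }
    rewrite (E1 Rmult), (E2 Rmult). clear E1 E2.
    rewrite plus_INR.
    destruct (Nat.ltb_spec i h), (Nat.ltb_spec j h).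
    + rewrite IHm by lia. destruct (i =? j)%nat; ring.
    + assert (E : forall a b, fsum h (fun z => hadamard m a z * - hadamard m b z)
                  = - fsum h (fun z => hadamard m a z * hadamard m b z)).
      { intros. transitivity (fsum h (fun z => -1 * (hadamard m a z * hadamard m b z))).
        apply fsum_ext; intros; ring. rewrite fsum_scal; ring. }
      rewrite E. destruct (Nat.eqb_spec i j); [lia|]. ring.
    + assert (E : forall a b, fsum h (fun z => - hadamard m a z * hadamard m b z)
                  = - fsum h (fun z => hadamard m a z * hadamard m b z)).
      { intros. transitivity (fsum h (fun z => -1 * (hadamard m a z * hadamard m b z))).
        apply fsum_ext; intros; ring. rewrite fsum_scal; ring. }
      rewrite E. destruct (Nat.eqb_spec i j); [lia|]. ring.
    + assert (E : forall a b, fsum h (fun z => - hadamard m a z * - hadamard m b z)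
                  = fsum h (fun z => hadamard m a z * hadamard m b z)).
      { intros. apply fsum_ext; intros; ring. }
      rewrite E, IHm by lia.
      destruct (Nat.eqb_spec (i - h) (j - h)), (Nat.eqb_spec i j); try lia; ring.
Qed.

Definition hh (k : nat) (phi : nat -> nat) (x z : nat) := hadamard (logK k) (phi x) z.

Lemma K_pos k : 0 < INR (Kof k).
Proof. apply lt_0_INR. apply pow2_pos. Qed.

Lemma W_form k eps phi z x :
  HR_W k eps phi z x = / INR (Kof k) * (1 + alphaH eps * hh k phi x z).
Proof.
  unfold HR_W, alphaH, hh. pose proof (K_pos k). pose proof (exp_pos eps).
  destruct (Req_EM_T (hadamard (logK k) (phi x) z) 1) as [E|E].
  - rewrite E. field. lra.
  - destruct (had_pm (logK k) (phi x) z) as [E'|E']; [contradiction|].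
    rewrite E'. field. lra.
Qed.

Lemma orth_phi k phi x y : valid_phi k phi -> (x < k)%nat -> (y < k)%nat ->
  fsum (Kof k) (fun z => hh k phi x z * hh k phi y z) =
  if Nat.eqb x y then INR (Kof k) else 0.
Proof.
  intros [Hr Hi] Hx Hy. unfold hh, Kof. rewrite had_orth.
  - destruct (Nat.eqb_spec (phi x) (phi y)), (Nat.eqb_spec x y); auto.
    + apply Hi in e; auto. contradiction.
    + subst. contradiction.
  - apply Hr; auto.
  - apply Hr; auto.
Qed.

Lemma sum_phi0 k phi x : valid_phi k phi -> (x < k)%nat ->
  fsum (Kof k) (fun z => hh k phi x z) = 0.
Proof.
  intros [Hr Hi] Hx. unfold hh.
  pose proof (had_orth (logK k) 0 (phi x)) as H.
  specialize (Hr x Hx). unfold Kof in *.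
  rewrite <- (fsum_ext _ (fun z => hadamard (logK k) 0 z * hadamard (logK k) (phi x) z)).
  - rewrite H by lia. destruct (Nat.eqb_spec 0 (phi x)); [lia|reflexivity].
  - intros. rewrite had_row0. ring.
Qed.

Lemma KL k phi f g : valid_phi k phi ->
  fsum (Kof k) (fun z => fsum k (fun x => hh k phi x z * f x) * fsum k (fun y => hh k phi y z * g y))
  = INR (Kof k) * fsum k (fun x => f x * g x).
Proof.
  intros Hv.
  rewrite (fsum_ext _ _ (fun z => fsum k (fun x => fsum k (fun y => (hh k phi x z * f x) * (hh k phi y z * g y)))))
    by (intros; apply fsum_prod).
  rewrite fsum_swap.
  rewrite (fsum_ext k _ (fun x => fsum k (fun y => f x * g y * fsum (Kof k) (fun z => hh k phi x z * hh k phi y z)))).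
  2:{ intros x Hx. rewrite fsum_swap. apply fsum_ext. intros y Hy.
      rewrite <- fsum_scal. apply fsum_ext. intros; ring. }
  rewrite (fsum_ext k _ (fun x => f x * g x * INR (Kof k))).
  2:{ intros x Hx.
      rewrite (fsum_ext k _ (fun y => if Nat.eqb x y then f x * g y * INR (Kof k) else 0)).
      - apply (fsum_delta k x (fun y => f x * g y * INR (Kof k))); auto.
      - intros y Hy. rewrite orth_phi by auto. destruct (x =? y)%nat; ring. }
  rewrite fsum_scalr. ring.
Qed.

Lemma KZ k phi f : valid_phi k phi ->
  fsum (Kof k) (fun z => fsum k (fun x => hh k phi x z * f x)) = 0.
Proof.
  intros Hv. rewrite fsum_swap.
  rewrite (fsum_ext k _ (fun _ => 0)). apply fsum_zero.
  intros x Hx. rewrite fsum_scalr, sum_phi0 by auto. ring.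
Qed.

Section Sec.
Variables (k : nat) (eps : R) (phi : nat -> nat) (p q : nat -> nat -> R).
Local Notation h := (hh k phi).
Local Notation c := (/ INR (Kof k)).
Local Notation a := (alphaH eps).
Definition Dd x1 x2 := p x1 x2 - q x1 x2.
Definition d1 x := marg1 k p x - marg1 k q x.
Definition d2 x := marg2 k p x - marg2 k q x.
Definition U1 z := fsum k (fun x => hh k phi x z * d1 x).
Definition U2 z := fsum k (fun x => hh k phi x z * d2 x).
Definition Wf x1 z2 := fsum k (fun x2 => hh k phi x2 z2 * Dd x1 x2).
Definition V z1 z2 := fsum k (fun x1 => hh k phi x1 z1 * Wf x1 z2).

Lemma T_diff z1 z2 :
  fsum k (fun x1 => fsum k (fun x2 => Dd x1 x2)) = 0 ->
  HR_T k eps phi p z1 z2 - HR_T k eps phi q z1 z2 = c ^ 2 * (a * U1 z1 + a * U2 z2 + a ^ 2 * V z1 z2).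
Proof.
  intros S0. unfold HR_T. rewrite <- fsum_minus.
  set (Ds x1 := fsum k (fun x2 => Dd x1 x2)).
  rewrite (fsum_ext k _ (fun x1 => c ^ 2 * Ds x1 + (c ^ 2 * a) * (h x1 z1 * Ds x1)
       + (c ^ 2 * a) * Wf x1 z2 + (c ^ 2 * a ^ 2) * (h x1 z1 * Wf x1 z2))).
  2:{ intros x1 Hx1. rewrite <- fsum_minus.
      transitivity (fsum k (fun x2 => (c ^ 2 * (1 + a * h x1 z1)) * Dd x1 x2
          + (c ^ 2 * a * (1 + a * h x1 z1)) * (h x2 z2 * Dd x1 x2))).
      - apply fsum_ext. intros. rewrite !W_form. unfold Dd. generalize (/ INR (Kof k)) (alphaH eps) (hh k phi x1 z1) (hh k phi i z2) (p x1 i) (q x1 i). intros. ring.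
      - rewrite fsum_plus, !fsum_scal. unfold Ds, Wf. change (fsum k (Dd x1)) with (fsum k (fun x2 => Dd x1 x2)). ring. }
  rewrite !fsum_plus, !fsum_scal. fold Ds in S0. rewrite S0.
  assert (E1 : fsum k (fun x1 => h x1 z1 * Ds x1) = U1 z1).
  { apply fsum_ext. intros. unfold Ds, d1, Dd, marg1. rewrite fsum_minus. reflexivity. }
  assert (E2 : fsum k (fun x1 => Wf x1 z2) = U2 z2).
  { unfold Wf, U2. rewrite fsum_swap. apply fsum_ext. intros.
    rewrite fsum_scal. unfold d2, Dd, marg2. rewrite fsum_minus. reflexivity. }
  rewrite E1, E2. unfold V. ring.
Qed.


Lemma sq_sum_d1 : fsum k (fun x => d1 x ^ 2) = l2sq1 k (marg1 k p) (marg1 k q).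
Proof. unfold l2sq1. apply fsum_ext. intros. unfold d1. ring. Qed.
Lemma sq_sum_d2 : fsum k (fun x => d2 x ^ 2) = l2sq1 k (marg2 k p) (marg2 k q).
Proof. unfold l2sq1. apply fsum_ext. intros. unfold d2. ring. Qed.

Lemma main_id : valid_phi k phi ->
  fsum k (fun x1 => fsum k (fun x2 => Dd x1 x2)) = 0 ->
  l2sq2 (Kof k) (HR_T k eps phi p) (HR_T k eps phi q) =
    a ^ 4 / INR (Kof k) ^ 2 * l2sq2 k p q
    + a ^ 2 / INR (Kof k) ^ 2 *
        (l2sq1 k (marg1 k p) (marg1 k q) + l2sq1 k (marg2 k p) (marg2 k q)).
Proof.
  intros Hv S0.
  assert (KL' : forall f, fsum (Kof k) (fun z => fsum k (fun x => hh k phi x z * f x) ^ 2)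
      = INR (Kof k) * fsum k (fun x => f x ^ 2)).
  { intros f. transitivity (INR (Kof k) * fsum k (fun x => f x * f x)).
    rewrite <- (KL k phi) by auto. apply fsum_ext. intros. ring.
    f_equal. apply fsum_ext. intros. ring. }
  assert (A1 : fsum (Kof k) (fun z1 => fsum (Kof k) (fun z2 => U1 z1 ^ 2)) = INR (Kof k) * (INR (Kof k) * l2sq1 k (marg1 k p) (marg1 k q))).
  { rewrite (fsum_ext _ _ (fun z1 => INR (Kof k) * U1 z1 ^ 2)) by (intros; apply fsum_const).
    rewrite fsum_scal. unfold U1. rewrite KL', sq_sum_d1. reflexivity. }
  assert (A2 : fsum (Kof k) (fun z1 => fsum (Kof k) (fun z2 => U2 z2 ^ 2)) = INR (Kof k) * (INR (Kof k) * l2sq1 k (marg2 k p) (marg2 k q))).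
  { rewrite (fsum_ext _ _ (fun z1 => INR (Kof k) * l2sq1 k (marg2 k p) (marg2 k q))).
    rewrite fsum_const. reflexivity.
    intros. unfold U2. rewrite KL', sq_sum_d2. reflexivity. }
  assert (A3 : fsum (Kof k) (fun z1 => fsum (Kof k) (fun z2 => V z1 z2 ^ 2)) = INR (Kof k) * (INR (Kof k) * l2sq2 k p q)).
  { rewrite fsum_swap.
    rewrite (fsum_ext (Kof k) _ (fun z2 => INR (Kof k) * fsum k (fun x1 => Wf x1 z2 ^ 2)))
      by (intros; unfold V; apply KL').
    rewrite fsum_scal, fsum_swap. f_equal.
    unfold l2sq2. rewrite <- fsum_scal. apply fsum_ext. intros x1 _.
    unfold Wf. rewrite KL'. reflexivity. }
  assert (A4 : fsum (Kof k) (fun z1 => fsum (Kof k) (fun z2 => U1 z1 * U2 z2)) = 0).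
  { rewrite (fsum_ext _ _ (fun z1 => U1 z1 * 0)). rewrite fsum_scalr. ring.
    intros. rewrite fsum_scal. unfold U2. rewrite KZ by auto. reflexivity. }
  assert (A5 : fsum (Kof k) (fun z1 => fsum (Kof k) (fun z2 => U1 z1 * V z1 z2)) = 0).
  { rewrite (fsum_ext _ _ (fun z1 => U1 z1 * 0)). rewrite fsum_scalr. ring.
    intros z1 _. rewrite fsum_scal. f_equal. unfold V. rewrite fsum_swap.
    rewrite (fsum_ext k _ (fun _ => 0)). apply fsum_zero.
    intros x1 _. rewrite fsum_scal. unfold Wf. rewrite KZ by auto. ring. }
  assert (A6 : fsum (Kof k) (fun z1 => fsum (Kof k) (fun z2 => U2 z2 * V z1 z2)) = 0).
  { rewrite fsum_swap.
    rewrite (fsum_ext _ _ (fun z2 => U2 z2 * 0)). rewrite fsum_scalr. ring.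
    intros z2 _. rewrite fsum_scal. f_equal. unfold V. apply KZ; auto. }
  unfold l2sq2 at 1.
  rewrite (fsum_ext _ _ (fun z1 =>
      (/ INR (Kof k)) ^ 4 * a ^ 2 * fsum (Kof k) (fun z2 => U1 z1 ^ 2)
    + (/ INR (Kof k)) ^ 4 * a ^ 2 * fsum (Kof k) (fun z2 => U2 z2 ^ 2)
    + (/ INR (Kof k)) ^ 4 * a ^ 4 * fsum (Kof k) (fun z2 => V z1 z2 ^ 2)
    + 2 * (/ INR (Kof k)) ^ 4 * a ^ 2 * fsum (Kof k) (fun z2 => U1 z1 * U2 z2)
    + 2 * (/ INR (Kof k)) ^ 4 * a ^ 3 * fsum (Kof k) (fun z2 => U1 z1 * V z1 z2)
    + 2 * (/ INR (Kof k)) ^ 4 * a ^ 3 * fsum (Kof k) (fun z2 => U2 z2 * V z1 z2))).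
  2:{ intros z1 _. rewrite <- !fsum_scal, <- !fsum_plus. apply fsum_ext. intros z2 _.
      rewrite T_diff by auto. ring. }
  rewrite !fsum_plus, !fsum_scal.
  rewrite A1, A2, A3, A4, A5, A6.
  pose proof (K_pos k). field. lra.
Qed.

End Sec.
Theorem lemma6p4 (k : nat) (eps : R) (phi : nat -> nat)
    (p q : nat -> nat -> R) :
  (1 <= k)%nat -> 0 < eps -> valid_phi k phi ->
  is_dist2 k p -> is_dist2 k q ->
  let K := INR (Kof k) in
  let T := HR_T k eps phi in
  l2sq2 (Kof k) (T p) (T q) =
    alphaH eps ^ 4 / K ^ 2 * l2sq2 k p q
    + alphaH eps ^ 2 / K ^ 2 *
        (l2sq1 k (marg1 k p) (marg1 k q) + l2sq1 k (marg2 k p) (marg2 k q))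
  /\
  (forall gamma : R, dTV2 k p q > gamma ->
     sqrt (l2sq2 (Kof k) (T p) (T q)) > 2 * alphaH eps ^ 2 * gamma / (K * INR k)).
Proof.
  intros Hk Heps Hv [Hp0 Hp1] [Hq0 Hq1] K T.
  assert (S0 : fsum k (fun x1 => fsum k (fun x2 => Dd p q x1 x2)) = 0).
  { rewrite (fsum_ext k _ (fun x1 => fsum k (fun x2 => p x1 x2) - fsum k (fun x2 => q x1 x2))).
    rewrite fsum_minus, Hp1, Hq1. ring.
    intros. unfold Dd. apply fsum_minus. }
  assert (ID := main_id k eps phi p q Hv S0).
  split; [exact ID|].
  intros gamma Hg. unfold T. rewrite ID. fold K.
  set (a := alphaH eps) in *.
  set (N := l2sq2 k p q).
  set (M := l2sq1 k (marg1 k p) (marg1 k q) + l2sq1 k (marg2 k p) (marg2 k q)).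
  set (kr := INR k).
  assert (HK : 0 < K) by apply K_pos.
  assert (Hkr : 0 < kr) by (apply lt_0_INR; lia).
  assert (Ha : 0 < a).
  { unfold a, alphaH. pose proof (exp_increasing 0 eps Heps). rewrite exp_0 in H.
    apply Rdiv_lt_0_compat; lra. }
  assert (HN : 0 <= N).
  { apply fsum_nonneg; intros; apply fsum_nonneg; intros; apply pow2_ge_0. }
  assert (HM : 0 <= M).
  { unfold M, l2sq1. apply Rplus_le_le_0_compat; apply fsum_nonneg; intros; apply pow2_ge_0. }
  set (Dn := fsum k (fun i => fsum k (fun j => Rabs (p i j - q i j)))).
  assert (HDn : dTV2 k p q = / 2 * Dn) by reflexivity.
  assert (HDn0 : 0 <= Dn).
  { apply fsum_nonneg; intros; apply fsum_nonneg; intros; apply Rabs_pos. }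
  assert (CS : Dn ^ 2 <= kr * (kr * N)).
  { eapply Rle_trans. apply fsum_cs. fold kr. apply Rmult_le_compat_l; [lra|].
    unfold N, l2sq2. rewrite <- fsum_scal. apply fsum_le. intros i _.
    eapply Rle_trans. apply fsum_cs. fold kr. apply Rmult_le_compat_l; [lra|].
    right. apply fsum_ext. intros. rewrite <- Rsqr_pow2, <- Rsqr_abs, Rsqr_pow2. reflexivity. }
  set (X := a ^ 2 * Dn / (K * kr)).
  assert (HX0 : 0 <= X).
  { unfold X. apply Rmult_le_pos. apply Rmult_le_pos; [pose proof (pow2_ge_0 a); lra| lra].
    left. apply Rinv_0_lt_compat. nra. }
  assert (HX2 : X ^ 2 <= a ^ 4 / K ^ 2 * N + a ^ 2 / K ^ 2 * M).
  { assert (E : X ^ 2 = a ^ 4 / (K ^ 2 * kr ^ 2) * Dn ^ 2) by (unfold X; field; lra).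
    assert (P1 : 0 <= a ^ 4 / (K ^ 2 * kr ^ 2)).
    { apply Rmult_le_pos. pose proof (pow2_ge_0 (a^2)). replace (a^4) with ((a^2)^2) by ring. lra.
      left. apply Rinv_0_lt_compat. apply Rmult_lt_0_compat; apply pow_lt; lra. }
    assert (P2 : 0 <= a ^ 2 / K ^ 2 * M).
    { apply Rmult_le_pos; [|lra]. apply Rmult_le_pos. apply pow2_ge_0.
      left. apply Rinv_0_lt_compat. apply pow_lt; lra. }
    rewrite E. eapply Rle_trans. apply Rmult_le_compat_l; [exact P1| exact CS].
    replace (a ^ 4 / (K ^ 2 * kr ^ 2) * (kr * (kr * N))) with (a ^ 4 / K ^ 2 * N) by (field; lra).
    lra. }
  assert (Hs : X <= sqrt (a ^ 4 / K ^ 2 * N + a ^ 2 / K ^ 2 * M)).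
  { rewrite <- (sqrt_pow2 X HX0). apply sqrt_le_1_alt. exact HX2. }
  apply Rlt_le_trans with X; [|exact Hs].
  unfold X. rewrite HDn in Hg.
  assert (Hpos : 0 < a ^ 2 / (K * kr)).
  { apply Rdiv_lt_0_compat. apply pow_lt; lra. nra. }
  apply Rlt_0_minus.
  replace (a ^ 2 * Dn / (K * kr) - 2 * a ^ 2 * gamma / (K * kr)) with
    (a ^ 2 / (K * kr) * (Dn - 2 * gamma)) by (field; lra).
  apply Rmult_lt_0_compat; lra.
Qed.
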